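(* Let $(W,S)$ be a Coxeter system whose Davis complex $\Sigma(W,S)$ is two-dimensional, and suppose that for every $t\in S$ the (unweighted, $\mathbf{q}=\mathbf{1}$) reduced $L^2$-homology $L^2_\mathbf{1}H_i(\Omega(S,\{t\}),\partial\Omega(S,\{t\}))$ vanishes for all $i\neq 1$. Then $L^2_\mathbf{q}H_2(\Sigma(W,S))=0$ for every multiparameter $\mathbf{q}\le\mathbf{1}$ (i.e. $q_s\le 1$ for all $s\in S$).
   Context: A Coxeter system $(W,S)$; $U\subseteq S$ is spherical if $\langle U\rangle$ is finite. A multiparameter is $\mathbf{q}=(q_s)_{s\in S}$, $q_s>0$, constant on conjugacy classes; $\mathbf{1}$ is the all-ones multiparameter. The Coxeter cellulation of the Davis complex has cells $wc_U$ ($w\in W$, $U$ spherical) of dimension $|U|$. The $(S,T)$-ruin for spherical $T$: $\Omega(S,T)$ is the union of closed Coxeter cells of type $T'\supseteq T$ ($T'$ spherical), and $\partial\Omega(S,T)$ consists of the cells of $\Omega(S,T)$ whose type does not contain $T$. Weighted $L^2$-homology: cell $w\sigma$ gets measure $q_u$, $u$ the shortest element of $wW_{S(\sigma)}$; chains are square-summable for $\sum f(\sigma)g(\sigma)\mu_\mathbf{q}(\sigma)$; $\partial^\mathbf{q}$ is the adjoint of the coboundary; reduced homology $\ker\partial^\mathbf{q}/\overline{\operatorname{im}\partial^\mathbf{q}}$ (relative version for pairs). *)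

(* Defs.v *)
From Stdlib Require Import Reals List ClassicalEpsilon ClassicalDescription.
From mathcomp Require Import all_boot.
Set Implicit Arguments. Unset Strict Implicit. Unset Printing Implicit Defensive.

Record grp := Grp {
  gcar :> Type;
  gmul : gcar -> gcar -> gcar;
  gone : gcar;
  ginv : gcar -> gcar;
  gmulA : forall x y z, gmul x (gmul y z) = gmul (gmul x y) z;
  gmul1l : forall x, gmul gone x = x;
  gmulVl : forall x, gmul (ginv x) x = gone }.
Arguments gmul {g}. Arguments gone {g}. Arguments ginv {g}.

Fixpoint gpow (G : grp) (x : G) (n : nat) : G :=
  match n with O => gone | S k => gmul x (gpow x k) end.

Definition geval (G : grp) (S : finType) (gen : S -> G) (w : seq S) : G :=
  foldr (fun s acc => gmul (gen s) acc) gone w.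

(* (W,S) is a Coxeter system (Bourbaki): S is a set of involutions generating W,
   and W has the presentation < S | (st)^{m(s,t)} = 1 >, m(s,t) = order of st,
   expressed by the universal property of the presentation. *)
Definition coxeter_system (G : grp) (S : finType) (gen : S -> G) : Prop :=
  injective gen /\
  (forall s, gen s <> gone) /\
  (forall s, gmul (gen s) (gen s) = gone) /\
  (forall x : G, exists w : seq S, geval gen w = x) /\
  (forall (H : grp) (phi : S -> H),
     (forall s t n, gpow (gmul (gen s) (gen t)) n = gone ->
                    gpow (gmul (phi s) (phi t)) n = gone) ->
     exists psi : G -> H,
       (forall x y, psi (gmul x y) = gmul (psi x) (psi y)) /\
       (forall s, psi (gen s) = phi s)).

Section Davis.
Variables (G : grp) (S : finType) (gen : S -> G).
Local Open Scope R_scope.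

Definition len (x : G) : nat :=
  epsilon (inhabits 0%nat) (fun n =>
    (exists w, size w = n /\ geval gen w = x) /\
    (forall w, geval gen w = x -> (n <= size w)%N)).

Definition redword (x : G) : seq S :=
  epsilon (inhabits [::]) (fun w => geval gen w = x /\ size w = len x).
Definition qw (q : S -> R) (x : G) : R :=
  foldr (fun s acc => q s * acc) 1 (redword x).

Definition inWU (U : {set S}) (x : G) : Prop :=
  exists w : seq S, all (fun s => s \in U) w /\ geval gen w = x.
Definition spherical (U : {set S}) : Prop :=
  exists l : list G, forall x, inWU U x -> In x l.

(* dim Sigma(W,S) = max { |U| : U spherical } = 2 *)
Definition davis_dim2 : Prop :=
  (exists U, spherical U /\ #|U| = 2%nat) /\
  (forall U, spherical U -> (#|U| <= 2)%N).

Definition multiparameter (q : S -> R) : Prop :=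
  (forall s, 0 < q s) /\
  (forall s t (x : G), gen t = gmul (ginv x) (gmul (gen s) x) -> q s = q t).

Definition min_in_coset (w : G) (U : {set S}) : Prop :=
  forall u, inWU U u -> (len w <= len (gmul w u))%N.
(* Coxeter cells w c_U are indexed by (w,U), U spherical, w shortest in wW_U;
   the dimension of w c_U is |U| and its type is U. *)
Definition is_cell (w : G) (U : {set S}) : Prop := spherical U /\ min_in_coset w U.
Definition minrep (v : G) (U : {set S}) : G :=
  epsilon (inhabits v) (fun w => inWU U (gmul (ginv v) w) /\ min_in_coset w U).

Definition ind (P : Prop) : R := if excluded_middle_informative P then 1 else 0.

(* incidence number [w c_U : v c_{U - r}] for v in wW_U, w shortest in wW_U:
   (-1)^{l(w^{-1} v)} * (-1)^{position of r in U}  (orientation via enum order of S) *)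
Definition incid (U : {set S}) (r : S) (w v : G) : R :=
  pow (-1) (len (gmul (ginv w) v)) *
  pow (-1) #|[set x in U | (enum_rank x < enum_rank r)%N]|.

(* Cells in play are those whose type satisfies P (P = True: the Davis complex;
   P U = (t \in U): cells of Omega(S,{t}) not in its boundary, i.e. the relative
   chain complex of the pair).  Measure of the cell w c_U (w shortest) is q_w. *)
(* weighted boundary d^q = adjoint of the coboundary w.r.t. the q-inner product:
   (d^q f)(tau) = (1/mu(tau)) * sum_{sigma > tau} [sigma:tau] mu(sigma) f(sigma) *)
Definition bdq (q : S -> R) (P : {set S} -> Prop) (f : G -> {set S} -> R)
    (v : G) (V : {set S}) : R :=
  ind (is_cell v V /\ P V) * / qw q v *
  \big[Rplus/0]_(r : S)
     (ind (r \notin V) *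
      (ind (is_cell (minrep v (r |: V)) (r |: V) /\ P (r |: V)) *
       incid (r |: V) r (minrep v (r |: V)) v *
       qw q (minrep v (r |: V)) * f (minrep v (r |: V)) (r |: V))).

Definition wsum (q : S -> R) (h : G -> {set S} -> R) (l : list (G * {set S})) : R :=
  fold_right (fun p acc => qw q p.1 * (h p.1 p.2) ^ 2 + acc) 0 l.

Definition l2chain (q : S -> R) (P : {set S} -> Prop) (i : nat)
    (f : G -> {set S} -> R) : Prop :=
  (forall w U, f w U <> 0 -> is_cell w U /\ P U /\ #|U| = i) /\
  (exists B, forall l, NoDup l -> wsum q f l <= B).

(* reduced L^2_q homology in degree i vanishes:
   ker d_i is contained in the closure of im d_{i+1}. *)
Definition L2H_vanishes (q : S -> R) (P : {set S} -> Prop) (i : nat) : Prop :=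
  forall f, l2chain q P i f -> (forall v V, bdq q P f v V = 0) ->
  forall eps, 0 < eps -> exists g, l2chain q P i.+1 g /\
    forall l, NoDup l -> wsum q (fun v V => bdq q P g v V - f v V) l <= eps.

End Davis.

(* Main.v *)
Require Import Defs.
From Stdlib Require Import Classical Reals Lra ClassicalEpsilon ClassicalDescription.
From mathcomp Require Import all_boot.

Local Open Scope R_scope.

Lemma indT (P : Prop) : P -> Defs.ind P = 1.
Proof. intro H; unfold Defs.ind; destruct (excluded_middle_informative P); [reflexivity|contradiction]. Qed.
Lemma indF (P : Prop) : ~ P -> Defs.ind P = 0.
Proof. intro H; unfold Defs.ind; destruct (excluded_middle_informative P); [contradiction|reflexivity]. Qed.
Arguments indT {P}. Arguments indF {P}.

Lemma foldr_bounds (S : Type) (q : S -> R) (l : seq S) :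
  (forall s, 0 < q s <= 1) ->
  0 < foldr (fun s acc => q s * acc) 1 l <= 1.
Proof.
  intro Hq; induction l as [|a l IH]; simpl; [lra|].
  destruct (Hq a); destruct IH; split; [nra|nra].
Qed.

Lemma foldr_one (S : Type) (l : seq S) :
  foldr (fun (s : S) acc => R1 * acc) 1 l = 1.
Proof. induction l as [|a l IH]; simpl; [reflexivity| rewrite IH; lra]. Qed.

Lemma bdq_zero (G : grp) (S : finType) (gen : S -> G) q P v V :
  bdq gen q P (fun _ _ => 0) v V = 0.
Proof.
  unfold bdq.
  rewrite (@big_ind R (fun x => x = 0) 0 Rplus); [lra|reflexivity| |].
  - intros x y -> ->; lra.
  - intros i _; lra.
Qed.

Lemma bdq_ext_zero (G : grp) (S : finType) (gen : S -> G) q P g v V :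
  (forall w U, g w U = 0) -> bdq gen q P g v V = 0.
Proof.
  intro Hg. rewrite -(@bdq_zero G S gen q P v V). unfold bdq. f_equal.
  apply: eq_bigr => r _. rewrite Hg; reflexivity.
Qed.

Lemma wsum_zero (G : grp) (S : finType) (gen : S -> G) q l :
  wsum gen q (fun _ _ => 0) l = 0.
Proof. induction l as [|a l IH]; simpl; [reflexivity| rewrite IH; lra]. Qed.

Lemma wsum_ext (G : grp) (S : finType) (gen : S -> G) q h h' l :
  (forall v V, h v V = h' v V) -> wsum gen q h l = wsum gen q h' l.
Proof. intro E; induction l as [|a l IH]; simpl; [reflexivity| rewrite IH E; reflexivity]. Qed.

Theorem corollary6p5 (G : grp) (S : finType) (gen : S -> G)
  (Hcox : coxeter_system gen)
  (Hdim : davis_dim2 gen)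
  (Hruin : forall (t : S) (i : nat), i <> 1%nat ->
     L2H_vanishes gen (fun _ => R1) (fun U => t \in U) i)
  (q : S -> R) (Hq : multiparameter gen q) (Hq1 : forall s, Rle (q s) R1) :
  L2H_vanishes gen q (fun _ => True) 2.
Proof.
  assert (Hqb : forall s, 0 < q s <= 1).
  { intro s; destruct Hq as [Hp _]; split; [apply Hp|apply Hq1]. }
  assert (Hqw : forall w, 0 < qw gen q w <= 1).
  { intro w; unfold qw; apply foldr_bounds; exact Hqb. }
  assert (Hqw1 : forall w, qw gen (fun _ => R1) w = 1).
  { intro w; unfold qw; apply foldr_one. }
  assert (H3 : forall (qq : S -> R) P g, l2chain gen qq P 3 g -> forall w U, g w U = 0).
  { intros qq P g [Hs _] w U. destruct (Req_dec (g w U) 0) as [E|E]; [exact E|].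
    destruct (Hs w U E) as [[Hsph _] [_ Hc]].
    destruct Hdim as [_ Hd]. have := Hd U Hsph. rewrite Hc. discriminate. }
  intros f [Hfs [B HB]] Hbd eps Heps.
  assert (Hf0 : forall v V, f v V = 0).
  { intros v V. destruct (Req_dec (f v V) 0) as [E|E]; [exact E|].
    destruct (Hfs v V E) as [Hcell [_ HcV]].
    have : (0 < #|V|)%N by rewrite HcV.
    move=> /card_gt0P [t Ht].
    set f' := fun (w : G) (U : {set S}) => Defs.ind (is_true (t \in U)) * qw gen q w * f w U.
    assert (Hl2 : l2chain gen (fun _ => R1) (fun U => is_true (t \in U)) 2 f').
    { split.
      - intros w U Hne. destruct (classic (is_true (t \in U))) as [Hin|Hin].
        + assert (f w U <> 0) as Hfne.
          { intro Z; apply Hne; unfold f'; rewrite Z; lra. }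
          destruct (Hfs w U Hfne) as [A [_ C]]; tauto.
        + exfalso; apply Hne; unfold f'; rewrite (indF Hin); lra.
      - exists B; intros l Hl. eapply Rle_trans; [|apply (HB l Hl)].
        clear Hl; induction l as [|[w U] l IH]; simpl; [lra|].
        apply Rplus_le_compat; [|exact IH].
        rewrite Hqw1; unfold f'.
        destruct (Hqw w) as [Ha Hb].
        destruct (classic (is_true (t \in U))) as [Hin|Hin];
          [rewrite (indT Hin)|rewrite (indF Hin)];
          assert (0 <= f w U ^ 2) by (apply pow2_ge_0); nra. }
    assert (Hbd' : forall v V, bdq gen (fun _ => R1) (fun U => is_true (t \in U)) f' v V = 0).
    { intros v0 V0. destruct (classic (is_true (t \in V0))) as [Hin|Hin].
      - have := Hbd v0 V0. unfold bdq.
        set s1 := (\big[Rplus/0]_r _).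
        set s2 := (\big[Rplus/0]_r _).
        assert (Es : s2 = s1).
        { subst s1 s2. apply: eq_bigr => r _.
          have Hin' : is_true (t \in r |: V0) by rewrite in_setU Hin orbT.
          unfold f'; rewrite (indT Hin') Hqw1.
          destruct (classic (is_cell gen (minrep gen v0 (r |: V0)) (r |: V0))) as [C|C].
          - rewrite (indT (conj C Hin')) (indT (conj C I)); lra.
          - rewrite (@indF (_ /\ is_true _)) ?(@indF (_ /\ True)); try lra; tauto. }
        rewrite Es.
        destruct (classic (is_cell gen v0 V0)) as [C|C].
        + rewrite (indT (conj C I)) (indT (conj C Hin)) => H.
          destruct (Hqw v0) as [Ha _].
          assert (/ qw gen q v0 <> 0) by (apply Rinv_neq_0_compat; lra).
          assert (s1 = 0).
          { apply (Rmult_eq_reg_l (1 * / qw gen q v0)); [rewrite Rmult_0_r; exact H|lra].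
            }
          rewrite H1; lra.
        + rewrite (@indF (_ /\ is_true _)); [lra|tauto].
      - unfold bdq; rewrite (@indF (_ /\ is_true _)); [lra|tauto]. }
    assert (Hf'0 : f' v V = 0).
    { destruct (Req_dec (f' v V) 0) as [Z|Z]; [exact Z|exfalso].
      assert (Hp : 0 < f' v V ^ 2 / 2).
      { assert (0 < f' v V ^ 2) by (apply pow_lt_compat_l_0 || (simpl; assert (f' v V * f' v V > 0) by (apply Rsqr_pos_lt; exact Z); nra)). lra. }
      destruct (Hruin t 2%nat ltac:(discriminate) f' Hl2 Hbd' _ Hp) as [g [Hg Hw]].
      have := Hw [:: (v, V)] ltac:(constructor; [intro K; inversion K|constructor]).
      simpl. rewrite Hqw1.
      rewrite (@bdq_ext_zero G S gen _ _ g _ _ (H3 _ _ g Hg)). intro K.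
      assert (0 < f' v V ^ 2) by (apply pow_lt_compat_l_0 || (simpl; assert (f' v V * f' v V > 0) by (apply Rsqr_pos_lt; exact Z); nra)). nra. }
    unfold f' in Hf'0. rewrite (indT Ht) in Hf'0.
    destruct (Hqw v) as [Ha _]. exfalso; apply E.
    apply (Rmult_eq_reg_l (1 * qw gen q v)); [rewrite Rmult_0_r; exact Hf'0|lra]. }
  exists (fun _ _ => 0). split.
  - split; [intros w U K; exfalso; apply K; reflexivity|].
    exists 0; intros l _; rewrite wsum_zero; lra.
  - intros l _. rewrite (@wsum_ext _ _ gen q _ (fun _ _ => 0)); [rewrite wsum_zero; lra|].
    intros v V; rewrite bdq_zero Hf0; lra.
Qed.
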